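(* The rational map $\mathbb{P}^2 \dashrightarrow \mathbb{P}^3$, $(r:s:t) \mapsto (w:x:y:z)$ with \[ (w:x:y:z) = (r^3 - s^3 : s^3 + t^3 : r^2s - s^2t + t^2r : r^2t - s^2r - t^2s), \] defined over $\mathbb{Q}$, is a birational map from $\mathbb{P}^2$ onto the cubic surface $S_3: wx(w+x) = y^3 + z^3$. Moreover, for this parametrization $wx(w+x)$, as a homogeneous polynomial of degree $9$ in $r,s,t$, factors over $\mathbb{Q}$ as a product of three linear and three quadratic factors.
   Context: No additional context. *)

(* Defs.v *)
From HB Require Import structures.
From mathcomp Require Import all_boot all_algebra.
From mathcomp Require Import mpoly.

Set Implicit Arguments.
Unset Strict Implicit.
Unset Printing Implicit Defensive.

Import GRing.Theory.
Local Open Scope ring_scope.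

(** Homogeneous coordinates (r:s:t) of P^2 : polynomials in {mpoly rat[3]};
    homogeneous coordinates (w:x:y:z) of P^3 : polynomials in {mpoly rat[4]}. *)

Definition pr : {mpoly rat[3]} := 'X_(inord 0).
Definition ps : {mpoly rat[3]} := 'X_(inord 1).
Definition pt : {mpoly rat[3]} := 'X_(inord 2).

Definition qw : {mpoly rat[4]} := 'X_(inord 0).
Definition qx : {mpoly rat[4]} := 'X_(inord 1).
Definition qy : {mpoly rat[4]} := 'X_(inord 2).
Definition qz : {mpoly rat[4]} := 'X_(inord 3).

Definition phi17 : 4.-tuple {mpoly rat[3]} :=
  [tuple pr ^+ 3 - ps ^+ 3;
         ps ^+ 3 + pt ^+ 3;
         pr ^+ 2 * ps - ps ^+ 2 * pt + pt ^+ 2 * pr;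
         pr ^+ 2 * pt - ps ^+ 2 * pr - pt ^+ 2 * ps].

Definition wxwx : {mpoly rat[4]} := qw * qx * (qw + qx).
Definition S3eq : {mpoly rat[4]} := wxwx - (qy ^+ 3 + qz ^+ 3).

(** A rational map P^(m-1) --> P^(n-1) given by n homogeneous polynomials
    of a common degree in m variables, not all zero. *)
Definition rat_map (m n : nat) (f : n.-tuple {mpoly rat[m]}) : Prop :=
  (exists e : nat, forall i, tnth f i \is e.-homog) /\
  (exists i, tnth f i != 0).

(** [f] : P^(m-1) --> P^(n-1) is a birational map onto the (irreducible)
    hypersurface {F = 0} of P^(n-1), all defined over Q:
    - f is a rational map whose image lies in {F = 0};
    - there is a rational map g : {F = 0} --> P^(m-1) (homogeneous
      polynomials of a common degree in the coordinates of P^(n-1)) such that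
      g o f = id as rational maps of P^(m-1)  (g(f(p)) = h(p) . p, h <> 0), and
      f o g = id as rational maps of {F = 0}  (f(g(q)) = k(q) . q modulo F,
      with k not vanishing identically on {F = 0}, i.e. F does not divide k). *)
Definition birational_onto_hypersurface (m n : nat)
    (f : n.-tuple {mpoly rat[m]}) (F : {mpoly rat[n]}) : Prop :=
  rat_map f /\
  F \mPo f = 0 /\
  exists (d : nat) (g : m.-tuple {mpoly rat[n]}),
    (forall j, tnth g j \is d.-homog) /\
    (exists h : {mpoly rat[m]}, h != 0 /\
        forall j, tnth g j \mPo f = h * 'X_j) /\
    (exists k : {mpoly rat[n]}, (~ exists c, k = c * F) /\
        forall i, exists q : {mpoly rat[n]}, tnth f i \mPo g = k * 'X_i + q * F).

Definition mirreducible (m : nat) (p : {mpoly rat[m]}) : Prop :=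
  (1 < msize p)%N /\
  forall a b : {mpoly rat[m]}, p = a * b -> msize a = 1%N \/ msize b = 1%N.

(* Main.v *)
Require Import Defs.
From HB Require Import structures.
From mathcomp Require Import all_boot all_algebra.
From mathcomp Require Import mpoly.
From mathcomp Require Import ring lra zify.
Import GRing.Theory Num.Theory.
Local Open Scope ring_scope.

Lemma affine_line (n : nat) (a : {mpoly rat[n]}) (p d : 'I_n -> rat) u :
  (msize a <= 2)%N ->
  a.@[fun i => p i + u * d i] = a.@[p] + u * (a.@[fun i => p i + d i] - a.@[p]).
Proof.
move=> Ha; rewrite !mevalE -sumrB mulr_sumr -big_split /=.
apply: eq_big_seq => m Hm.
have Hd : (mdeg m <= 1)%N by have := msize_mdeg_lt Hm => H; rewrite -ltnS; exact: leq_trans H Ha.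
have E : forall v : 'I_n -> rat, \prod_i v i ^+ m i = ('X_[m] : {mpoly rat[n]}).@[v].
  by move=> v; rewrite mevalX.
rewrite !E.
case: (mdeg m =P 0%N) => [/eqP|H0].
  rewrite mdeg_eq0 => /eqP ->; rewrite mpolyX0 !meval1; ring.
have /mdeg1P [i /eqP ->] : mdeg m == 1%N by rewrite eqn_leq Hd lt0n; apply/eqP.
rewrite !mevalXU; ring.
Qed.


Lemma homog_msize2 n (q : {mpoly rat[n]}) d : q \is d.-homog -> (msize q <= d.+1)%N.
Proof.
move=> Hh; rewrite msizeE big_seq; apply: (big_ind (fun x => x <= d.+1)%N) => //.
  by move=> x y Hx Hy; rewrite geq_max Hx Hy.
by move=> m Hm; rewrite (dhomog_mf Hh Hm).
Qed.

Lemma irr_line (q : {mpoly rat[3]}) (p d : 'I_3 -> rat) (c : rat) :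
  q \is 2.-homog ->
  (forall u, q.@[fun i => p i + u * d i] = u^+2 + c*u + 1) -> c^+2 < 4 ->
  mirreducible q.
Proof.
move=> Hh Hq Hc.
have Hs := @homog_msize2 _ _ 2 Hh.
have q0 : q != 0.
  apply/negP => /eqP H; have := Hq 0; rewrite H meval0 => E.
  by move: E; rewrite expr2 !mul0r !add0r; lra.
split.
  rewrite ltnNge; apply/negP => /msize1_polyC Hq0.
  have := Hq 0; have := Hq 1; have := Hq (-1); rewrite Hq0 !mevalC !expr2.
  move=> E1 E2 E3; nra.
move=> a b Hab.
have a0 : a != 0 by apply: contraNneq q0 => H; rewrite Hab H mul0r.
have b0 : b != 0 by apply: contraNneq q0 => H; rewrite Hab H mulr0.
have := msizeM a0 b0; rewrite -Hab => Hm.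
have Ha : msize a != 0%N by rewrite msize_poly_eq0.
have Hb : msize b != 0%N by rewrite msize_poly_eq0.
have [H1|H1] := boolP (msize a == 1%N); first by left; apply/eqP.
have [H2|H2] := boolP (msize b == 1%N); first by right; apply/eqP.
exfalso.
have [Ha2 Hb2] : (msize a <= 2)%N /\ (msize b <= 2)%N.
  move: Hs Hm Ha Hb H1 H2; set x := msize a; set y := msize b; set z := msize q.
  rewrite -subn1; lia.
set A0 := a.@[p]; set A1 := a.@[fun i => p i + d i] - A0.
set B0 := b.@[p]; set B1 := b.@[fun i => p i + d i] - B0.
have E : forall u, (A0 + u * A1) * (B0 + u * B1) = u^+2 + c*u + 1.
  by move=> u; rewrite -Hq Hab mevalM !affine_line.
have E0 := E 0; have E1 := E 1; have E2 := E (-1).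
have HAB : A1 * B1 = 1.
  have : (A0 + 1*A1)*(B0+1*B1) + (A0 + (-1)*A1)*(B0+(-1)*B1) - 2*((A0+0*A1)*(B0+0*B1)) = 2*(A1*B1) by ring.
  rewrite E0 E1 E2 !expr2 => H; lra.
have A10 : A1 != 0 by apply/eqP => H0; move: HAB; rewrite H0 mul0r; lra.
have := E (- A0 / A1).
have -> : A0 + (- A0 / A1) * A1 = 0 by rewrite divfK // subrr.
rewrite mul0r => H.
set u0 := - A0 / A1 in H.
have : 0 < (2 * u0 + c) ^+ 2 + (4 - c ^+ 2).
  by apply: ltr_wpDl; [apply: sqr_ge0 | rewrite subr_gt0].
rewrite !expr2 in H *; nra.
Qed.

Lemma cX4 (i : nat) (n : nat) (lq : 4.-tuple {mpoly rat[n]}) (Hi : (i < 4)%N) :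
  ('X_(inord i) : {mpoly rat[4]}) \mPo lq = lq`_i.
Proof. by rewrite comp_mpolyXU inordK. Qed.
Lemma cX3 (i : nat) (n : nat) (lq : 3.-tuple {mpoly rat[n]}) (Hi : (i < 3)%N) :
  ('X_(inord i) : {mpoly rat[3]}) \mPo lq = lq`_i.
Proof. by rewrite comp_mpolyXU inordK. Qed.
Lemma eX (n : nat) (i : nat) (s : seq rat) (Hi : (i < n.+1)%N) :
  ('X_(inord i) : {mpoly rat[n.+1]}).@[fun j => nth 0 s j] = nth 0 s i.
Proof. by rewrite mevalXU inordK. Qed.
Lemma XI n (i : 'I_n.+1) : ('X_i : {mpoly rat[n.+1]}) = 'X_(inord i).
Proof. by rewrite inord_val. Qed.

Lemma Xhom n (i : 'I_n) : ('X_i : {mpoly rat[n]}) \is 1.-homog.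
Proof. by rewrite dhomogX; apply/eqP; apply: mdeg1. Qed.
Lemma hD n d (p q : {mpoly rat[n]}) : p \is d.-homog -> q \is d.-homog -> p + q \is d.-homog.
Proof. exact: dhomogD. Qed.
Lemma hB n d (p q : {mpoly rat[n]}) : p \is d.-homog -> q \is d.-homog -> p - q \is d.-homog.
Proof. by move=> Hp Hq; apply: dhomogD => //; rewrite dhomogN. Qed.
Lemma hM n d e f (p q : {mpoly rat[n]}) : p \is d.-homog -> q \is e.-homog -> (d + e = f)%N ->
  p * q \is f.-homog.
Proof. by move=> Hp Hq <-; apply: dhomogM. Qed.
Lemma hX n d f k (p : {mpoly rat[n]}) : p \is d.-homog -> (d * k = f)%N -> p ^+ k \is f.-homog.
Proof. by move=> Hp <-; apply: dhomogMn. Qed.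
Lemma hN n d (p : {mpoly rat[n]}) : p \is d.-homog -> - p \is d.-homog.
Proof. by rewrite dhomogN. Qed.

Ltac hom_tac := repeat first
  [ apply: hN | apply: hD | apply: hB | apply: hM | apply: hX | apply: Xhom | reflexivity ].

Definition g17 : 3.-tuple {mpoly rat[4]} :=
  [tuple qy ^+ 2 - qw * qz; qw * qx - qy * qz; qx * qy - qz ^+ 2].
Definition h17 : {mpoly rat[3]} :=
  2%:R * pr^+3 * ps^+2 - pr * ps^+3 * pt + 3%:R * pr^+2 * ps * pt^+2
  - 2%:R * ps^+2 * pt^+3 + pr * pt^+4 - pr^+4 * pt - ps^+5.
Definition k17 : {mpoly rat[4]} :=
  - 3%:R * qy^+4 * qz + 3%:R * qw * qy^+2 * qz^+2 - qw^+2 * qx^+3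
  + 3%:R * qw * qx^+2 * qy * qz - 3%:R * qx * qy^+2 * qz^+2 - qw^+4 * qx
  - qw^+3 * qx^+2 + qw^+2 * qy^+3 + qw * qx * qy^+3 + qx^+2 * qy^+3.
Definition Q17 : 4.-tuple {mpoly rat[4]} :=
  [tuple qw^+3 - qy^+3;
         qz^+3 - 3%:R * qx * qy * qz + qw^+2 * qx + qw * qx^+2;
         qw * qz^+2 - 2%:R * qy^+2 * qz + qw^+2 * qy;
         - qy * qz^+2 + qw^+2 * qz + qw * qx * qz - qx * qy^+2].

Lemma gf (j : 'I_3) : tnth g17 j \mPo phi17 = h17 * 'X_j.
Proof.
rewrite XI; case: j => [[|[|[|//]]] Hj] /=;
rewrite /g17 /tnth /= /qw /qx /qy /qz !(rmorphB, rmorphD, rmorphM, rmorphXn) /= !cX4 //=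
  /h17 /pr /ps /pt; ring.
Qed.

Lemma fg (i : 'I_4) : tnth phi17 i \mPo g17 = k17 * 'X_i + tnth Q17 i * S3eq.
Proof.
rewrite XI; case: i => [[|[|[|[|//]]]] Hi] /=;
rewrite /phi17 /tnth /= /pr /ps /pt !(rmorphB, rmorphD, rmorphM, rmorphXn) /= !cX3 //=
  /k17 /Q17 /S3eq /wxwx /qw /qx /qy /qz /=; ring.
Qed.

Lemma compF : S3eq \mPo phi17 = 0.
Proof.
rewrite /S3eq /wxwx /qw /qx /qy /qz.
rewrite !(rmorphB, rmorphD, rmorphM, rmorphXn) /= !cX4 //= /phi17 /=.
ring.
Qed.

Ltac ev := rewrite ?(rmorphB, rmorphD, rmorphM, rmorphXn, rmorphN, rmorph_nat, rmorph1, rmorph0) /= ?eX //=.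

Lemma h17_neq0 : h17 != 0.
Proof.
apply/eqP => H; have := congr1 (meval (fun j : 'I_3 => nth 0 [:: 1; 1; 0] j)) H.
rewrite meval0 /h17 /pr /ps /pt; ev.
Qed.

Lemma k17_nmul : ~ exists c, k17 = c * S3eq.
Proof.
move=> [c H]; have := congr1 (meval (fun j : 'I_4 => nth 0 [:: 0; 1; 1; -1] j)) H.
rewrite mevalM /k17 /S3eq /wxwx /qw /qx /qy /qz; ev.
set e := meval _ c; lra.
Qed.

Lemma phi_neq0 : tnth phi17 ord0 != 0.
Proof.
apply/eqP => H; have := congr1 (meval (fun j : 'I_3 => nth 0 [:: 1; 0; 0] j)) H.
rewrite meval0 /tnth /= /pr /ps /pt; ev.
Qed.

Definition q1 : {mpoly rat[3]} := pr ^+ 2 + pr * ps + ps ^+ 2.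
Definition q2 : {mpoly rat[3]} := ps ^+ 2 - ps * pt + pt ^+ 2.
Definition q3 : {mpoly rat[3]} := pr ^+ 2 - pr * pt + pt ^+ 2.

Lemma q1_irr : mirreducible q1.
Proof.
apply: (@irr_line q1 (fun j => nth 0 [:: 0; 1; 0] j) (fun j => nth 0 [:: 1; 0; 0] j) 1).
- rewrite /q1 /pr /ps; hom_tac.
- move=> u; rewrite /q1 /pr /ps; ev; rewrite !mevalXU !inordK //=; ring.
- lra.
Qed.

Lemma q2_irr : mirreducible q2.
Proof.
apply: (@irr_line q2 (fun j => nth 0 [:: 0; 1; 0] j) (fun j => nth 0 [:: 0; 0; 1] j) (-1)).
- rewrite /q2 /ps /pt; hom_tac.
- move=> u; rewrite /q2 /ps /pt; ev; rewrite !mevalXU !inordK //=; ring.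
- lra.
Qed.

Lemma q3_irr : mirreducible q3.
Proof.
apply: (@irr_line q3 (fun j => nth 0 [:: 0; 0; 1] j) (fun j => nth 0 [:: 1; 0; 0] j) (-1)).
- rewrite /q3 /pr /pt; hom_tac.
- move=> u; rewrite /q3 /pr /pt; ev; rewrite !mevalXU !inordK //=; ring.
- lra.
Qed.

Theorem mainTheorem17 :
  birational_onto_hypersurface phi17 S3eq /\
  exists l1 l2 l3 q1 q2 q3 : {mpoly rat[3]},
    [/\ l1 \is 1.-homog, l2 \is 1.-homog & l3 \is 1.-homog] /\
    [/\ q1 \is 2.-homog, q2 \is 2.-homog & q3 \is 2.-homog] /\
    [/\ mirreducible q1, mirreducible q2 & mirreducible q3] /\
    wxwx \mPo phi17 = l1 * l2 * l3 * (q1 * q2 * q3).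
Proof.
split.
  split.
    split.
      exists 3%N => i; case: i => [[|[|[|[|//]]]] Hi];
        rewrite /tnth /= /pr /ps /pt; hom_tac.
    by exists ord0; exact: phi_neq0.
  split; first exact: compF.
  exists 2%N, g17; split.
    move=> j; case: j => [[|[|[|//]]] Hj]; rewrite /tnth /= /qw /qx /qy /qz; hom_tac.
  split.
    by exists h17; split; [exact: h17_neq0 | exact: gf].
  exists k17; split; first exact: k17_nmul.
  by move=> i; exists (tnth Q17 i); exact: fg.
exists (pr - ps), (ps + pt), (pr + pt), q1, q2, q3.
split; first by split; rewrite /pr /ps /pt; hom_tac.
split; first by split; rewrite /q1 /q2 /q3 /pr /ps /pt; hom_tac.
split; first by split; [exact: q1_irr | exact: q2_irr | exact: q3_irr].
rewrite /wxwx /qw /qx /q1 /q2 /q3.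
rewrite !(rmorphB, rmorphD, rmorphM, rmorphXn) /= !cX4 //= /phi17 /=.
ring.
Qed.
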